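(* There exists an instance of the influential bandit problem (with $K=2$, $A$ symmetric positive semi-definite with $\max_{ij}|A_{ij}|\le 2$, and zero noise) on which the standard LCB algorithm incurs regret $\Omega\!\left(T^2/\log^2 T\right)$ as $T\to\infty$.
   Context: Influential bandit problem: there are $K$ arms, an unknown symmetric positive semi-definite interaction matrix $A\in\mathbb{R}^{K\times K}$ and an unknown initial loss vector $l^{(1)}\in\mathbb{R}^K$. At each round $t=1,\dots,T$ the algorithm chooses $i^{(t)}\in[K]$ based on past observations, observes $L^{(t)}=l^{(t)}_{i^{(t)}}+\xi^{(t)}$ where $\xi^{(t)}$ is zero-mean noise, and then $l^{(t+1)}_j=l^{(t)}_j+A_{i^{(t)}j}$ for all $j\in[K]$. The regret of the sequence of choices is $\sum_{t=1}^T l^{(t)}_{i^{(t)}}-\min_{(j_1,\dots,j_T)\in[K]^T}\sum_{t=1}^T l^{(t)}_{j_t}$, where in the minimum the losses evolve under the same dynamics driven by $j_1,\dots,j_T$. The standard LCB algorithm chooses $i^{(t)}=\arg\min_{i\in[K]}\big(\hat\mu_i-\sqrt{2\log t/n_i}\big)$, where $n_i$ is the number of times arm $i$ has been chosen before round $t$ and $\hat\mu_i$ is the empirical mean of its observed losses; ties are broken in favor of the smallest index, and an arm with $n_i=0$ is given score $-\infty$. (The witnessing instance in the paper is $K=2$, $A=\begin{pmatrix}1&1\\1&2\end{pmatrix}$, $l^{(1)}=(1,1)$, $\xi^{(t)}=0$.) *)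

(* Defs.v *)
From Stdlib Require Import Reals Lra List Arith.
Import ListNotations.
Open Scope R_scope.

(* Arms are the naturals 0, ..., K-1.  Rounds are numbered 1, 2, 3, ... *)

Fixpoint sumR (n : nat) (f : nat -> R) : R :=
  match n with
  | O => 0
  | S m => sumR m f + f m
  end.

Definition symmetric_mx (K : nat) (A : nat -> nat -> R) : Prop :=
  forall i j, (i < K)%nat -> (j < K)%nat -> A i j = A j i.

Definition psd_mx (K : nat) (A : nat -> nat -> R) : Prop :=
  forall x : nat -> R, 0 <= sumR K (fun i => sumR K (fun j => x i * A i j * x j)).

(* Loss vector at round t (t >= 1) when the arm chosen at round s is ch s:
   l^(t)_j = l^(1)_j + sum_{s=1}^{t-1} A_{ch s, j}. *)
Fixpoint cumA (A : nat -> nat -> R) (ch : nat -> nat) (n j : nat) : R :=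
  match n with
  | O => 0
  | S m => cumA A ch m j + A (ch (S m)) j
  end.

Definition loss (A : nat -> nat -> R) (l1 : nat -> R) (ch : nat -> nat)
  (t j : nat) : R := l1 j + cumA A ch (t - 1) j.

Fixpoint cost (A : nat -> nat -> R) (l1 : nat -> R) (ch : nat -> nat)
  (T : nat) : R :=
  match T with
  | O => 0
  | S m => cost A l1 ch m + loss A l1 ch (S m) (ch (S m))
  end.

(* A history is the list of (arm chosen, observed loss) for rounds 1..t-1. *)
Definition ch_of (h : list (nat * R)) (s : nat) : nat :=
  nth (s - 1) (map fst h) 0%nat.

Definition n_pulls (h : list (nat * R)) (i : nat) : nat :=
  length (filter (fun p => Nat.eqb (fst p) i) h).

Definition sum_obs (h : list (nat * R)) (i : nat) : R :=
  fold_right Rplus 0 (map snd (filter (fun p => Nat.eqb (fst p) i) h)).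

(* LCB score at round t; None stands for -infinity (arm never pulled). *)
Definition lcb_score (t : nat) (h : list (nat * R)) (i : nat) : option R :=
  match n_pulls h i with
  | O => None
  | n => Some (sum_obs h i / INR n - sqrt (2 * ln (INR t) / INR n))
  end.

Definition score_lt (a b : option R) : bool :=
  match a, b with
  | None, Some _ => true
  | Some x, Some y => if Rlt_dec x y then true else false
  | _, _ => false
  end.

(* argmin of f over 0..n-1, ties broken in favour of the smallest index *)
Fixpoint argmin_upto (f : nat -> option R) (n : nat) : nat :=
  match n with
  | O => O
  | S m =>
      match m with
      | O => O
      | _ => let b := argmin_upto f m in
             if score_lt (f m) (f b) then m else b
      end
  end.

Definition lcb_choice (K t : nat) (h : list (nat * R)) : nat :=
  argmin_upto (lcb_score t h) K.

(* History of LCB after t rounds, with noise realisation xi (xi r = noise at round r). *)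
Fixpoint lcb_hist (K : nat) (A : nat -> nat -> R) (l1 : nat -> R)
  (xi : nat -> R) (t : nat) : list (nat * R) :=
  match t with
  | O => []
  | S t' =>
      let h := lcb_hist K A l1 xi t' in
      let i := lcb_choice K (S t') h in
      h ++ [(i, loss A l1 (ch_of h) (S t') i + xi (S t'))]
  end.

Definition lcb_arm (K : nat) (A : nat -> nat -> R) (l1 : nat -> R)
  (xi : nat -> R) (s : nat) : nat :=
  lcb_choice K s (lcb_hist K A l1 xi (s - 1)).

Fixpoint all_seqs (K T : nat) : list (list nat) :=
  match T with
  | O => [[]]
  | S m => flat_map (fun i => map (cons i) (all_seqs K m)) (seq 0 K)
  end.

Fixpoint minl (l : list R) : R :=
  match l with
  | [] => 0
  | [x] => x
  | x :: r => Rmin x (minl r)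
  end.

Definition seq_fun (js : list nat) (s : nat) : nat := nth (s - 1) js 0%nat.

Definition opt_cost (K : nat) (A : nat -> nat -> R) (l1 : nat -> R) (T : nat) : R :=
  minl (map (fun js => cost A l1 (seq_fun js) T) (all_seqs K T)).

Definition lcb_regret (K : nat) (A : nat -> nat -> R) (l1 : nat -> R)
  (xi : nat -> R) (T : nat) : R :=
  cost A l1 (lcb_arm K A l1 xi) T - opt_cost K A l1 T.

(* Main.v *)
Require Import Defs.
From Stdlib Require Import Reals Lra Lia List Arith.
Import ListNotations.
Open Scope R_scope.

Definition A0 (i j : nat) : R := if andb (Nat.eqb i 1) (Nat.eqb j 1) then 2 else 1.
Definition l0 (_ : nat) : R := 1.
Definition xi0 (_ : nat) : R := 0.

Fixpoint cnt (ch : nat -> nat) (n : nat) : R :=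
  match n with
  | O => 0
  | S m => cnt ch m + (if Nat.eqb (ch (S m)) 1 then 1 else 0)
  end.

Lemma cumA_eq ch n j :
  cumA A0 ch n j = INR n + (if Nat.eqb j 1 then cnt ch n else 0).
Proof.
  induction n; simpl cumA; simpl cnt.
  - destruct (Nat.eqb j 1); simpl; lra.
  - rewrite IHn, S_INR. unfold A0.
    destruct (Nat.eqb j 1); destruct (Nat.eqb (ch (S n)) 1); simpl; lra.
Qed.

Lemma loss_eq ch t j : (1 <= t)%nat ->
  loss A0 l0 ch t j = INR t + (if Nat.eqb j 1 then cnt ch (t - 1) else 0).
Proof.
  intros Ht. unfold loss, l0. rewrite cumA_eq.
  destruct t as [|t]; [lia|]. replace (S t - 1)%nat with t by lia.
  rewrite S_INR. lra.
Qed.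

Lemma cost_eq ch T :
  cost A0 l0 ch T = INR T * (INR T + 1) / 2 + cnt ch T * (cnt ch T - 1) / 2.
Proof.
  induction T; simpl cost; simpl cnt.
  - simpl. lra.
  - rewrite IHT, loss_eq by lia. replace (S T - 1)%nat with T by lia.
    rewrite S_INR. destruct (Nat.eqb (ch (S T)) 1); lra.
Qed.

Lemma minl_le l x : In x l -> minl l <= x.
Proof.
  induction l as [|a r IH]; simpl; [tauto|].
  intros [H|H].
  - subst. destruct r; [lra|]. apply Rmin_l.
  - destruct r; [inversion H|].
    eapply Rle_trans; [apply Rmin_r| apply IH; exact H].
Qed.

Lemma in_all_seqs T : In (repeat 0%nat T) (all_seqs 2 T).
Proof.
  induction T; simpl; [auto|].
  apply in_or_app. left. apply in_map. exact IHT.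
Qed.

Lemma cnt_zero ch n : (forall s, ch s = 0%nat) -> cnt ch n = 0.
Proof. intros H; induction n; simpl; [lra|]. rewrite H, IHn. simpl. lra. Qed.

Lemma opt_le T : opt_cost 2 A0 l0 T <= INR T * (INR T + 1) / 2.
Proof.
  unfold opt_cost.
  eapply Rle_trans.
  - apply minl_le. apply in_map. apply in_all_seqs.
  - rewrite cost_eq, cnt_zero. lra.
    intros s. unfold seq_fun. apply nth_repeat.
Qed.

Definition H t := lcb_hist 2 A0 l0 xi0 t.
Definition arm s := lcb_arm 2 A0 l0 xi0 s.

Lemma choice_eq t h : lcb_choice 2 t h =
  if score_lt (lcb_score t h 1) (lcb_score t h 0) then 1%nat else 0%nat.
Proof. reflexivity. Qed.

Lemma arm01 s : arm s = 0%nat \/ arm s = 1%nat.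
Proof. unfold arm, lcb_arm. rewrite choice_eq. destruct score_lt; auto. Qed.

Lemma H_S t : H (S t) = H t ++ [(arm (S t), loss A0 l0 (ch_of (H t)) (S t) (arm (S t)) + 0)].
Proof.
  unfold H, arm, lcb_arm. simpl lcb_hist. rewrite Nat.sub_0_r. reflexivity.
Qed.

Lemma H_len t : length (H t) = t.
Proof. induction t; [reflexivity|]. rewrite H_S, length_app, IHt. simpl. lia. Qed.

Lemma ch_of_H t s : (1 <= s <= t)%nat -> ch_of (H t) s = arm s.
Proof.
  induction t; intros Hs; [lia|].
  unfold ch_of in *. rewrite H_S, map_app.
  destruct (Nat.eq_dec s (S t)).
  - subst. rewrite app_nth2; rewrite length_map, H_len; [|lia].
    replace (S t - 1 - t)%nat with 0%nat by lia. reflexivity.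
  - rewrite app_nth1 by (rewrite length_map, H_len; lia). apply IHt. lia.
Qed.

Lemma cnt_ext ch ch' n : (forall s, (1 <= s <= n)%nat -> ch s = ch' s) -> cnt ch n = cnt ch' n.
Proof.
  induction n; intros E; simpl; [reflexivity|].
  rewrite IHn by (intros; apply E; lia). rewrite E by lia. reflexivity.
Qed.

Lemma n_pulls_app h a o i : n_pulls (h ++ [(a, o)]) i = (n_pulls h i + if Nat.eqb a i then 1 else 0)%nat.
Proof.
  unfold n_pulls. rewrite filter_app, length_app. simpl. destruct (Nat.eqb a i); simpl; lia.
Qed.

Lemma sum_obs_app h a o i : sum_obs (h ++ [(a, o)]) i = sum_obs h i + if Nat.eqb a i then o else 0.
Proof.
  unfold sum_obs. rewrite filter_app, map_app, fold_right_app. simpl.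
  destruct (Nat.eqb a i); simpl.
  - generalize (map snd (filter (fun p : nat * R => Nat.eqb (fst p) i) h)).
    intros l. induction l; simpl; lra.
  - lra.
Qed.

Lemma cnt_arm t : cnt arm t = INR (n_pulls (H t) 1).
Proof.
  induction t; [reflexivity|]. simpl cnt. rewrite H_S, n_pulls_app, plus_INR, IHt.
  destruct (Nat.eqb (arm (S t)) 1); simpl; lra.
Qed.

Lemma obs_eq t : loss A0 l0 (ch_of (H t)) (S t) (arm (S t)) + 0 =
  INR (S t) + if Nat.eqb (arm (S t)) 1 then INR (n_pulls (H t) 1) else 0.
Proof.
  rewrite loss_eq by lia. replace (S t - 1)%nat with t by lia.
  rewrite (cnt_ext _ arm) by (intros; apply ch_of_H; lia). rewrite cnt_arm. lra.
Qed.

Lemma ln_le_sub1 u : 0 < u -> ln u <= u - 1.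
Proof. intros Hu. pose proof (exp_ineq1_le (ln u)) as E. rewrite exp_ln in E by lra. lra. Qed.

Lemma ln_le' x y : 0 < x -> x <= y -> ln x <= ln y.
Proof. intros Hx Hxy. destruct (Rle_lt_or_eq_dec x y Hxy) as [h|h].
  - left. apply ln_increasing; lra.
  - subst; lra. Qed.

Lemma ln_nonneg x : 1 <= x -> 0 <= ln x.
Proof. intros. rewrite <- ln_1. apply ln_le'; lra. Qed.

Lemma ln_step x : 0 < x -> ln (x + 1) >= ln x + 1 / (x + 1).
Proof.
  intros Hx.
  assert (E : x = (x + 1) * (x / (x + 1))) by (field; lra).
  assert (P : 0 < x / (x + 1)) by (apply Rdiv_lt_0_compat; lra).
  pose proof (ln_le_sub1 (x / (x+1)) P) as Q.
  assert (E2 : ln x = ln (x+1) + ln (x / (x+1))).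
  { rewrite E at 1. apply ln_mult; lra. }
  assert (E3 : x / (x + 1) - 1 = - (1 / (x + 1))) by (field; lra).
  lra.
Qed.

Lemma score_some t h i : (1 <= n_pulls h i)%nat ->
  lcb_score t h i = Some (sum_obs h i / INR (n_pulls h i) - sqrt (2 * ln (INR t) / INR (n_pulls h i))).
Proof. intros. unfold lcb_score. destruct (n_pulls h i) eqn:E; [lia|reflexivity]. Qed.

Lemma arm0_cond t : arm (S t) = 0%nat -> (1 <= n_pulls (H t) 1)%nat -> (1 <= n_pulls (H t) 0)%nat ->
  sum_obs (H t) 0 / INR (n_pulls (H t) 0) - sqrt (2 * ln (INR (S t)) / INR (n_pulls (H t) 0))
  <= sum_obs (H t) 1 / INR (n_pulls (H t) 1) - sqrt (2 * ln (INR (S t)) / INR (n_pulls (H t) 1)).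
Proof.
  intros Ha H1 H0. unfold arm, lcb_arm in Ha. rewrite choice_eq in Ha.
  replace (S t - 1)%nat with t in Ha by lia. fold (H t) in Ha.
  rewrite !score_some in Ha by assumption. cbn [score_lt] in Ha.
  destruct Rlt_dec; [discriminate|]. lra.
Qed.

Lemma arm0_cond2 t : (1 <= t)%nat -> arm (S t) = 0%nat -> (1 <= n_pulls (H t) 1)%nat ->
  (n_pulls (H t) 1 <= n_pulls (H t) 0)%nat ->
  sum_obs (H t) 0 * INR (n_pulls (H t) 1) <= sum_obs (H t) 1 * INR (n_pulls (H t) 0).
Proof.
  intros Ht Ha H1 Hle.
  pose proof (arm0_cond t Ha H1 ltac:(lia)) as C.
  set (a := INR (n_pulls (H t) 1)) in *. set (b := INR (n_pulls (H t) 0)) in *.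
  assert (Ha1 : 1 <= a) by (unfold a; apply (le_INR 1); lia).
  assert (Hab : a <= b) by (unfold a, b; apply le_INR; lia).
  assert (L : 0 <= ln (INR (S t))) by (apply ln_nonneg; apply (le_INR 1); lia).
  assert (Hs : sqrt (2 * ln (INR (S t)) / b) <= sqrt (2 * ln (INR (S t)) / a)).
  { apply sqrt_le_1_alt. unfold Rdiv. apply Rmult_le_compat_l; [lra|].
    apply Rinv_le_contravar; lra. }
  assert (H2 : sum_obs (H t) 0 / b <= sum_obs (H t) 1 / a) by lra.
  unfold Rdiv in H2.
  apply Rmult_le_compat_r with (r := a * b) in H2; [|nra].
  replace (sum_obs (H t) 0 * / b * (a * b)) with (sum_obs (H t) 0 * a) in H2 by (field; lra).
  replace (sum_obs (H t) 1 * / a * (a * b)) with (sum_obs (H t) 1 * b) in H2 by (field; lra).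
  exact H2.
Qed.

Lemma arm_1 : arm 1 = 0%nat.
Proof. reflexivity. Qed.
Lemma arm_2 : arm 2 = 1%nat.
Proof. reflexivity. Qed.

Definition Inv t :=
 (n_pulls (H t) 0 + n_pulls (H t) 1 = t)%nat /\ (1 <= n_pulls (H t) 1)%nat /\ (1 <= n_pulls (H t) 0)%nat /\
 sum_obs (H t) 0 + sum_obs (H t) 1 = INR t * (INR t + 1)/2 + INR (n_pulls (H t) 1) * (INR (n_pulls (H t) 1) - 1)/2 /\
 INR (n_pulls (H t) 1) * INR (n_pulls (H t) 1) <= sum_obs (H t) 1 /\
 INR (n_pulls (H t) 1) * INR t <= 2 * sum_obs (H t) 1 + 2 * INR (n_pulls (H t) 1) /\
 sum_obs (H t) 1 <= INR (n_pulls (H t) 1) * (INR (n_pulls (H t) 1) + 1) * (1 + 2 * ln (INR (n_pulls (H t) 1) + 1)).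

Lemma Inv2 : Inv 2.
Proof.
  assert (E : H 2 = [(0%nat, INR 1 + 0); (1%nat, INR 2 + INR 0)]).
  { change 2%nat with (S 1). rewrite H_S, obs_eq, arm_2.
    change 1%nat with (S 0) at 1 2. rewrite H_S, obs_eq, arm_1. reflexivity. }
  unfold Inv. rewrite E. unfold n_pulls, sum_obs. simpl.
  assert (0 <= ln (1 + 1)) by (apply ln_nonneg; lra).
  repeat split; try lia; lra.
Qed.

Lemma Inv_step t : (2 <= t)%nat -> Inv t -> Inv (S t).
Proof.
  intros Ht [Hsum [Hn1 [Hm1 [Hb [Hc [HK HL]]]]]].
  unfold Inv. rewrite H_S, !n_pulls_app, !sum_obs_app, obs_eq.
  pose proof (arm0_cond2 t ltac:(lia)) as C.
  set (nn := n_pulls (H t) 1) in *. set (mm := n_pulls (H t) 0) in *.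
  set (S0 := sum_obs (H t) 0) in *. set (S1 := sum_obs (H t) 1) in *.
  assert (Rn : 1 <= INR nn) by (apply (le_INR 1); lia).
  assert (Rm : 1 <= INR mm) by (apply (le_INR 1); lia).
  assert (Rt : INR t = INR mm + INR nn) by (rewrite <- Hsum, plus_INR; lra).
  rewrite S_INR.
  destruct (arm01 (S t)) as [Ea|Ea]; rewrite Ea; simpl Nat.eqb; cbv iota.
  -
    rewrite !Nat.add_0_r. repeat split; try lia; try lra.
    + destruct (Nat.le_gt_cases nn mm) as [Hle|Hgt].
      * specialize (C Ea Hn1 Hle). fold S0 S1 nn mm in C.
        assert (E0 : S0 = INR t * (INR t + 1) / 2 + INR nn * (INR nn - 1) / 2 - S1) by lra.
        rewrite E0 in C.
        assert (Q : INR t * (INR t + 1) / 2 * INR nn <= S1 * INR t) by nra.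
        assert (Tp : 0 < INR t) by lra.
        assert (Q2 : (INR t + 1) / 2 * INR nn <= S1).
        { apply Rmult_le_reg_r with (INR t); [lra|]. nra. }
        nra.
      * assert (Rg : INR mm + 1 <= INR nn) by (rewrite <- S_INR; apply le_INR; lia).
        nra.
  -
    assert (Lg : ln (INR nn + 1 + 1) >= ln (INR nn + 1) + 1 / (INR nn + 1 + 1))
      by (apply ln_step; lra).
    repeat split; try lia; rewrite ?plus_INR; simpl INR; try lra.
    all: try (assert (Rtn : INR nn <= INR t) by lra; nra).
      set (V := 1 + 2 * ln (INR nn + 1)) in *.
      set (V' := 1 + 2 * ln (INR nn + 1 + 1)).
      assert (HV : V' * (INR nn + 2) >= V * (INR nn + 2) + 2).
      { unfold V', V. assert (E2 : 1 / (INR nn + 1 + 1) * (INR nn + 2) = 1) by (field; lra). nra. }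
      assert (Key : INR nn * (S1 + (INR t + 1 + INR nn)) <= INR nn * ((INR nn + 1) * (INR nn + 2) * V')).
      { assert (A1 : INR nn * (S1 + (INR t + 1 + INR nn)) <= (INR nn + 2) * S1 + INR nn * INR nn + 3 * INR nn) by nra.
        assert (A2 : (INR nn + 2) * S1 <= (INR nn + 2) * (INR nn * (INR nn + 1) * V)) by (apply Rmult_le_compat_l; lra).
        assert (A3 : INR nn * INR nn + 3 * INR nn <= INR nn * (2 * (INR nn + 1))) by nra.
        assert (A4 : (INR nn + 1) * (V * (INR nn + 2) + 2) <= (INR nn + 1) * (V' * (INR nn + 2))) by (apply Rmult_le_compat_l; lra).
        assert (A5 : INR nn * ((INR nn + 1) * (V * (INR nn + 2) + 2)) <= INR nn * ((INR nn + 1) * (V' * (INR nn + 2)))) by (apply Rmult_le_compat_l; lra).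
        lra. }
      apply Rmult_le_reg_l with (INR nn); [lra|]. unfold V' in Key.
      replace (INR nn + 2) with (INR nn + 1 + 1) in Key by lra. unfold V'. lra.
Qed.

Lemma Inv_all t : (2 <= t)%nat -> Inv t.
Proof.
  induction t; intros Ht; [lia|].
  destruct (Nat.eq_dec t 1); [subst; exact Inv2|].
  apply Inv_step; [lia|]. apply IHt. lia.
Qed.

Lemma regret_ge T : lcb_regret 2 A0 l0 (fun _ => 0) T >=
  INR (n_pulls (H T) 1) * (INR (n_pulls (H T) 1) - 1) / 2.
Proof.
  unfold lcb_regret. pose proof (opt_le T).
  rewrite cost_eq. change (lcb_arm 2 A0 l0 (fun _ => 0)) with arm. rewrite cnt_arm. lra.
Qed.

Lemma big_INR T : (10000 <= T)%nat -> 10000 <= INR T.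
Proof.
  intros HT. apply le_INR in HT. replace (INR 10000) with 10000 in HT. exact HT.
  rewrite INR_IZR_INZ. reflexivity.
Qed.

Lemma lnT_bounds x : 10000 <= x -> 1 <= ln x /\ ln x <= x / 50.
Proof.
  intros Hx. split.
  - rewrite <- (ln_exp 1). apply ln_le'. apply exp_pos. pose proof exp_le_3. lra.
  - pose proof (sqrt_sqrt x ltac:(lra)) as Es.
    assert (Sq : 100 <= sqrt x).
    { rewrite <- (sqrt_square 100) by lra. apply sqrt_le_1_alt. lra. }
    assert (Ln : ln x = 2 * ln (sqrt x)).
    { rewrite <- Es at 1. rewrite ln_mult by lra. lra. }
    pose proof (ln_le_sub1 (sqrt x) ltac:(lra)). nra.
Qed.

Theorem proposition2 :
  exists (A : nat -> nat -> R) (l1 : nat -> R),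
    symmetric_mx 2 A /\ psd_mx 2 A /\
    (forall i j, (i < 2)%nat -> (j < 2)%nat -> Rabs (A i j) <= 2) /\
    exists (c : R) (T0 : nat), 0 < c /\
      forall T : nat, (T0 <= T)%nat ->
        lcb_regret 2 A l1 (fun _ => 0) T >= c * (INR T ^ 2 / ln (INR T) ^ 2).
Proof.
  exists A0, l0. split; [|split; [|split]].
  - intros i j Hi Hj. unfold A0.
    destruct i as [|[|i]]; destruct j as [|[|j]]; try lia; reflexivity.
  - intros x. unfold A0. simpl. nra.
  - intros i j Hi Hj. unfold A0.
    destruct (andb _ _); rewrite Rabs_pos_eq; lra.
  - exists (1/288), 10000%nat. split; [lra|].
    intros T HT. pose proof (big_INR T HT) as HTr.
    destruct (lnT_bounds _ HTr) as [L1 L2].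
    assert (T2 : (2 <= T)%nat) by (apply INR_le; simpl; lra).
    destruct (Inv_all T T2) as [Hsum [Hn1 [Hm1 [Hb [Hc [HK HL]]]]]].
    pose proof (regret_ge T) as R.
    set (n := INR (n_pulls (H T) 1)) in *.
    set (LT := ln (INR T)) in *.
    assert (Rn : 1 <= n) by (apply (le_INR 1); lia).
    assert (Rn2 : n + 1 <= INR T).
    { rewrite <- Hsum, plus_INR. pose proof (le_INR 1 _ Hm1) as Hm. simpl in Hm. unfold n. lra. }
    assert (Lnn : ln (n + 1) <= LT) by (apply ln_le'; lra).
    assert (B1 : n * INR T <= n * (2 * (n + 1) * (1 + 2 * ln (n + 1)) + 2)) by nra.
    assert (B2 : INR T <= 2 * (n + 1) * (1 + 2 * ln (n + 1)) + 2).
    { apply Rmult_le_reg_l with n; lra. }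
    assert (B3 : INR T - 2 <= (n + 1) * (6 * LT)).
    { assert (0 <= ln (n + 1)) by (apply ln_nonneg; lra). nra. }
    assert (LTp : 0 < LT) by lra.
    set (x := INR T / LT).
    assert (Ex : INR T = x * LT) by (unfold x; field; lra).
    assert (B4 : n - 1 >= x / 12).
    { rewrite Ex in B3, L2. nra. }
    assert (Hx : 0 <= x) by (unfold x, Rdiv; apply Rmult_le_pos; [lra| left; apply Rinv_0_lt_compat; lra]).
    assert (Eg : INR T ^ 2 / LT ^ 2 = x * x) by (unfold x; field; lra).
    rewrite Eg. nra.
Qed.
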